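(* For every state $s\in S$, the number of actions $I$ occurring in the unique path $\underline\alpha(s)$ equals the class $K(s)$.
   Context: Fix integers $M\ge1$, $q\ge 2$. The augmented state set is $\overline S=\{(b_1,\dots,b_M,d;T,t): b_m,d,T\in\mathbb Z,\ 1\le t\le M+1,\ d+T+\sum_{m=1}^M b_m=0\}$, the BDM state set is $S=\{s\in\overline S:0\le T\le M\}$, initial state $s_0=(0,\dots,0,0;0,M+1)$. Feasible transitions from $s=(b_1,\dots,b_M,d;T,t)\in S$: if $t\le M$ and $b_t>d$, action $D$ to $(b_1,\dots,b_{t-1},d,b_{t+1},\dots,b_M,b_t;T,t+1)$ or action $I$ to $(b_1,\dots,b_M,d;T,t+1)$; if $t\le M$ and $b_t=d$, action $N_=$ to $(b_1,\dots,b_M,d;T,t+1)$; if $t\le M$ and $b_t<d$, action $N_<$ to $(b_1,\dots,b_M,d;T,t+1)$; if $t=M+1,T<M$, action $d_-$ to $(b_1,\dots,b_M,d-1;T+1,1)$; if $t=M+1,T=M$, action $b_+$ to $(b_1+1,\dots,b_M+1,d;0,1)$. For each $s\in S$ there is exactly one finite path of feasible transitions from $s_0$ to $s$ that uses only actions from $\{D,I,N_=,d_-,b_+\}$ and visits $s_0$ only at its start; call it $\underline\alpha(s)$. For $s\in\overline S$ let $x=(b_1,\dots,b_{t-1},d,b_t,\dots,b_M)$, $\tilde b_1\ge\dots\ge\tilde b_{M+1}$ its entries sorted nonincreasingly, $\pi_s$ the minimum number of neighbouring transpositions sorting $x$ nonincreasingly, and $K(s)=-\pi_s+MT+2\sum_{m=1}^{M+1}\tilde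 b_m(M+1-m)$ the class of $s$. *)

(* Defs.v *)
From mathcomp Require Import all_boot all_order all_algebra.
Set Implicit Arguments. Unset Strict Implicit. Unset Printing Implicit Defensive.
Import Order.TTheory GRing.Theory Num.Theory.
Local Open Scope ring_scope.

(* A state (b_1..b_M, d; T, t); bs is the list [b_1; ...; b_M]. *)
Record state := mkState { bs : seq int; dd : int; TT : int; tt : nat }.

Definition inSbar (M : nat) (s : state) : Prop :=
  size (bs s) = M /\ (1 <= tt s <= M.+1)%N /\ dd s + TT s + \sum_(b <- bs s) b = 0.

Definition inS (M : nat) (s : state) : Prop :=
  inSbar M s /\ 0 <= TT s /\ TT s <= M%:Z.

Definition s0 (M : nat) : state := mkState (nseq M 0) 0 0 M.+1.

Inductive action := aD | aI | aNeq | aNlt | aDminus | aBplus.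

Definition next (M : nat) (s : state) (a : action) : option state :=
  let t := tt s in
  if (t <= M)%N then
    let bt := nth 0 (bs s) t.-1 in
    match a with
    | aD => if dd s < bt then Some (mkState (set_nth 0 (bs s) t.-1 (dd s)) bt (TT s) t.+1) else None
    | aI => if dd s < bt then Some (mkState (bs s) (dd s) (TT s) t.+1) else None
    | aNeq => if bt == dd s then Some (mkState (bs s) (dd s) (TT s) t.+1) else None
    | aNlt => if bt < dd s then Some (mkState (bs s) (dd s) (TT s) t.+1) else None
    | _ => None
    end
  else if t == M.+1 then
    match a with
    | aDminus => if TT s < M%:Z then Some (mkState (bs s) (dd s - 1) (TT s + 1) 1) else None
    | aBplus => if TT s == M%:Z then Some (mkState (map (fun b => b + 1) (bs s)) (dd s) 0 1) else None
    | _ => None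
    end
  else None.

(* a path of feasible transitions from cur to target; p lists (action, reached state);
   every reached state is different from s0 (s0 is visited only at the start) *)
Fixpoint is_path (M : nat) (cur : state) (p : seq (action * state)) (target : state) : Prop :=
  match p with
  | [::] => cur = target
  | (a, s') :: p' => inS M cur /\ next M cur a = Some s' /\ s' <> s0 M /\ is_path M s' p' target
  end.

(* the actions allowed in underline-alpha: D, I, N_=, d_-, b_+ *)
Definition allowed (a : action) : bool := if a is aNlt then false else true.
Definition isI (a : action) : bool := if a is aI then true else false.

Definition xseq (s : state) : seq int :=
  take (tt s).-1 (bs s) ++ dd s :: drop (tt s).-1 (bs s).

Definition geZ (a b : int) : bool := b <= a.

Definition swap_adj (i : nat) (x : seq int) : seq int :=
  take i x ++ [:: nth 0 x i.+1; nth 0 x i] ++ drop i.+2 x.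

Definition apply_swaps (x : seq int) (l : seq nat) : seq int :=
  foldl (fun y i => swap_adj i y) x l.

Definition swaps_ok (x : seq int) (l : seq nat) : bool :=
  all (fun i => i.+1 < size x)%N l.

Definition min_swaps (x : seq int) (n : nat) : Prop :=
  (exists l, swaps_ok x l /\ size l = n /\ sorted geZ (apply_swaps x l)) /\
  (forall l, swaps_ok x l -> sorted geZ (apply_swaps x l) -> (n <= size l)%N).

Definition classK (M : nat) (s : state) (n : nat) : int :=
  let tb := sort geZ (xseq s) in
  - n%:Z + M%:Z * TT s + 2 * \sum_(i < M.+1) nth 0 tb i * (M - i)%:Z.

(* Main.v *)
Require Import Defs.
From mathcomp Require Import all_boot all_order all_algebra.
From mathcomp Require Import zify ring.
Import Order.TTheory GRing.Theory Num.Theory.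
Local Open Scope ring_scope.


Fixpoint invc (x : seq int) : nat :=
  match x with [::] => 0%N | a :: l => addn (count (fun y => a < y) l) (invc l) end.

Lemma inv_swap pre a b r :
  (invc (pre ++ a :: b :: r) + (b < a)%R)%N = (invc (pre ++ b :: a :: r) + (a < b)%R)%N.
Proof.
elim: pre => [|c pre IH] /=; first lia.
rewrite !count_cat /=; lia.
Qed.

Lemma geZ_trans : transitive geZ.
Proof. by move=> b a c; rewrite /geZ => h1 h2; apply: le_trans h2 h1. Qed.

Lemma sorted_inv0 x : sorted geZ x -> invc x = 0%N.
Proof.
elim: x => [//|a l IH] /= hp.
have hs := path_sorted hp.
rewrite IH // addn0.
apply/eqP; rewrite -leqn0 leqNgt -has_count; apply/hasPn => y hy.
have := order_path_min geZ_trans hp. move/allP/(_ y hy). rewrite /geZ => h.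
by rewrite -leNgt.
Qed.

Lemma inv0_sorted x : invc x = 0%N -> sorted geZ x.
Proof.
elim: x => [//|a l IH] /= /eqP; rewrite addn_eq0 => /andP[/eqP hc /eqP hi].
rewrite path_min_sorted; first exact: IH.
apply/allP => y hy; rewrite /geZ leNgt; apply/negP => h.
have : (0 < count (fun y => (a < y)%R) l)%N by rewrite -has_count; apply/hasP; exists y.
by rewrite hc.
Qed.

Lemma swap_adjE i x : (i.+1 < size x)%N ->
  x = take i x ++ nth 0 x i :: nth 0 x i.+1 :: drop i.+2 x /\
  swap_adj i x = take i x ++ nth 0 x i.+1 :: nth 0 x i :: drop i.+2 x.
Proof.
move=> hi; split; last by [].
by rewrite -(drop_nth 0 hi) -(drop_nth 0 (ltnW hi)) cat_take_drop.
Qed.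

Lemma size_swap i x : (i.+1 < size x)%N -> size (swap_adj i x) = size x.
Proof.
move=> hi; have [e1 e2] := swap_adjE i x hi.
by rewrite e2 [in RHS]e1 !size_cat.
Qed.

Lemma inv_swap_le i x : (i.+1 < size x)%N -> (invc x <= invc (swap_adj i x) + 1)%N.
Proof.
move=> hi; have [e1 e2] := swap_adjE i x hi.
have := inv_swap (take i x) (nth 0 x i) (nth 0 x i.+1) (drop i.+2 x).
rewrite -e1 -e2; case: (_ < _); case: (_ < _); lia.
Qed.

Lemma inv_swap_lt i x : (i.+1 < size x)%N -> nth 0 x i < nth 0 x i.+1 ->
  invc x = (invc (swap_adj i x)).+1.
Proof.
move=> hi hlt; have [e1 e2] := swap_adjE i x hi.
have := inv_swap (take i x) (nth 0 x i) (nth 0 x i.+1) (drop i.+2 x).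
rewrite -e1 -e2 hlt (lt_gtF hlt); lia.
Qed.

Lemma inv_lb l x : swaps_ok x l -> (invc x <= size l + invc (apply_swaps x l))%N.
Proof.
elim: l x => [|i l IH] x /=; first by rewrite add0n.
move=> /andP[hi hl].
have hsz := size_swap i x hi.
have h := IH (swap_adj i x).
rewrite /swaps_ok hsz in h; have {}h := h hl.
have := inv_swap_le i x hi.
rewrite /apply_swaps /= in h *; lia.
Qed.


Lemma ascent x : ~~ sorted geZ x ->
  exists i, (i.+1 < size x)%N /\ nth 0 x i < nth 0 x i.+1.
Proof.
move=> hns.
have : ~ (forall i, (i.+1 < size x)%N -> geZ (nth 0 x i) (nth 0 x i.+1)).
  by move=> h; move/negP: hns; apply; apply/(sortedP 0).
move=> hn.
case: (boolP [exists i : 'I_(size x), (i.+1 < size x)%N && (nth 0 x i < nth 0 x i.+1)]).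
  by move=> /existsP[i /andP[h1 h2]]; exists i.
move=> /existsPn hall; exfalso; apply: hn => i hi.
have hi' : (i < size x)%N by apply: ltnW.
have := hall (Ordinal hi'); rewrite /= hi /= /geZ -leNgt. done.
Qed.

Lemma inv_exists n x : invc x = n ->
  exists l, swaps_ok x l /\ size l = n /\ sorted geZ (apply_swaps x l).
Proof.
elim: n x => [|n IH] x hx.
  by exists [::]; split=> //; split=> //; apply: inv0_sorted.
have hns : ~~ sorted geZ x by apply/negP => /sorted_inv0; rewrite hx.
have [i [hi hlt]] := ascent x hns.
have e := inv_swap_lt i x hi hlt.
have [l [hl [hsz hs]]] := IH (swap_adj i x) ltac:(lia).
exists (i :: l); split; last by split; [rewrite /= hsz|].
by rewrite /swaps_ok /= hi -(size_swap i x hi).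
Qed.

Lemma min_swaps_inv x n : min_swaps x n -> n = invc x.
Proof.
move=> [[l [hl [hsz hs]]] hmin].
have h1 := inv_lb l x hl; rewrite (sorted_inv0 _ hs) hsz in h1.
have [l' [hl' [hsz' hs']]] := inv_exists _ _ (erefl (invc x)).
have := hmin _ hl' hs'; lia.
Qed.


Definition Q (l : seq int) : int :=
  \sum_(x <- l) \sum_(y <- l) Num.max x y - \sum_(x <- l) x.

Lemma Q_perm l1 l2 : perm_eq l1 l2 -> Q l1 = Q l2.
Proof.
move=> h; rewrite /Q (perm_big l2 h) [X in _ - X](perm_big l2 h).
congr (_ - _); apply: eq_bigr => x _; exact: perm_big.
Qed.

Lemma Q_cons c l : Q (c :: l) = 2 * \sum_(y <- l) Num.max c y + Q l.
Proof.
rewrite /Q !big_cons maxxx.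
have e2 : \sum_(x <- l) \sum_(y <- c :: l) Num.max x y
   = \sum_(y <- l) Num.max c y + \sum_(x <- l) \sum_(y <- l) Num.max x y.
  rewrite -big_split /=; apply: eq_bigr => x _; by rewrite big_cons maxC.
rewrite e2; ring.
Qed.

Lemma sum_max_const a l : all (fun y => y <= a) l ->
  \sum_(y <- l) Num.max a y = a * (size l)%:Z.
Proof.
elim: l => [|y l IH] /=; first by rewrite big_nil mulr0.
move=> /andP[hy hl]; rewrite big_cons IH // max_l //.
rewrite intS; ring.
Qed.

Lemma Q_sorted l : sorted geZ l ->
  Q l = 2 * \sum_(i < size l) nth 0 l i * ((size l).-1 - i)%:Z.
Proof.
elim: l => [|a l IH] hs; first by rewrite /Q !big_nil big_ord0; ring.
rewrite Q_cons IH ?(path_sorted hs) //.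
rewrite sum_max_const; last exact: (order_path_min geZ_trans hs).
rewrite big_ord_recl /= subn0.
have -> : \sum_(i < size l) nth 0 l i * ((size l).-1 - i)%:Z
   = \sum_(i < size l) nth 0 l i * (size l - (bump 0 i))%:Z.
  by apply: eq_bigr => i _; congr (_ * _%:Z); rewrite /bump /=; lia.
ring.
Qed.

Lemma size_xseq s : size (xseq s) = (size (bs s)).+1.
Proof. by rewrite /xseq size_cat /= addnS -size_cat cat_take_drop. Qed.

Lemma geZ_total : total geZ.
Proof. by move=> a b; rewrite /geZ orbC le_total. Qed.

Lemma classK_eq M s n : size (bs s) = M ->
  classK M s n = - n%:Z + M%:Z * TT s + Q (xseq s).
Proof.
move=> hsz; rewrite /classK.
set tb := sort geZ (xseq s).
have hp : perm_eq tb (xseq s) by rewrite perm_sort.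
have hs : sorted geZ tb by exact: (sort_sorted geZ_total (xseq s)).
have htb : size tb = M.+1 by rewrite size_sort size_xseq hsz.
rewrite -(Q_perm _ _ hp) (Q_sorted _ hs) htb /=.
done.
Qed.


Definition Gf (M : nat) (s : state) : int :=
  - (invc (xseq s))%:Z + M%:Z * TT s + Q (xseq s).

Lemma set_nth_mid (pre post : seq int) x d :
  set_nth 0 (pre ++ x :: post) (size pre) d = pre ++ d :: post.
Proof. by elim: pre => //= a pre ->. Qed.

Lemma take_mid (pre post : seq int) x :
  take (size pre).+1 (pre ++ x :: post) = rcons pre x.
Proof. by elim: pre => [|a pre IH] /=; [rewrite take0 | rewrite IH]. Qed.

Lemma drop_mid (pre post : seq int) x :
  drop (size pre).+1 (pre ++ x :: post) = post.
Proof. by elim: pre => [|a pre IH] /=; [rewrite drop0 | rewrite IH]. Qed.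

Lemma step_low (M : nat) (b pre post : seq int) (x d T : int) (t : nat) (a : action) (s' : state) :
  b = pre ++ x :: post -> t = (size pre).+1 -> (t <= M)%N ->
  allowed a -> Defs.next M (mkState b d T t) a = Some s' ->
  Gf M s' = Gf M (mkState b d T t) + (isI a)%:Z.
Proof.
move=> -> -> htM ha; rewrite /Defs.next /= htM.
have hn : nth 0 (pre ++ x :: post) (size pre) = x by rewrite nth_cat ltnn subnn.
rewrite hn.
have hx : xseq (mkState (pre ++ x :: post) d T (size pre).+1) = pre ++ d :: x :: post.
  by rewrite /xseq /= take_size_cat // drop_size_cat.
case: a ha => //= _.
- case: ifP => // hlt [<-].
  rewrite /Gf hx /xseq /= set_nth_mid take_mid drop_mid cat_rcons /=.
  by rewrite addr0.
- case: ifP => // hlt [<-].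
  rewrite /Gf hx /xseq /= take_mid drop_mid cat_rcons /=.
  have e := inv_swap pre d x post.
  rewrite hlt (lt_gtF hlt) in e.
  have -> : Q (pre ++ x :: d :: post) = Q (pre ++ d :: x :: post).
    apply: Q_perm; rewrite perm_cat2l.
    by have := perm_catCA [:: x] [:: d] post; rewrite /= => ->.
  lia.
- case: ifP => // /eqP hxd [<-].
  rewrite /Gf hx /xseq /= take_mid drop_mid cat_rcons /= hxd.
  by rewrite addr0.
Qed.

Lemma invc_rcons l (d : int) : invc (l ++ [:: d]) = (invc l + count (fun y => (y < d)%R) l)%N.
Proof. elim: l => [|a l IH] //=; rewrite count_cat IH /=; lia. Qed.

Lemma invc_map1 l : invc (map (fun b : int => b + 1) l) = invc l.
Proof.
elim: l => [|a l IH] //=; rewrite IH count_map; congr (_ + _)%N.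
by apply: eq_count => y /=; rewrite ltrD2r.
Qed.

Lemma aux_dm (l : seq int) (c : int) :
  - (count (fun y => (c - 1 < y)%R) l)%:Z + (count (fun y => (y < c)%R) l)%:Z + (size l)%:Z
  + 2 * (\sum_(y <- l) Num.max (c - 1) y - \sum_(y <- l) Num.max c y) = 0.
Proof.
elim: l => [|y l IH] /=; first by rewrite !big_nil; ring.
rewrite !big_cons !maxElt.
case: (ltP y c) => hy.
- have h1 : (c - 1 < y) = false by apply/negbTE; rewrite -leNgt; lia.
  have h3 : (c < y) = false by apply/negbTE; rewrite -leNgt; lia.
  rewrite h1 h3 /=; rewrite -[RHS]IH !PoszD intS; ring.
- have h1 : (c - 1 < y) = true by lia.
  rewrite h1 /=.
  case: (ltP c y) => hcy /=; rewrite -[RHS]IH !PoszD intS.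
  + ring.
  + have e : y = c by apply/eqP; rewrite eq_le hy hcy.
    rewrite e; ring.
Qed.

Lemma aux_bp (l : seq int) (c : int) :
  - (count (fun y => (c < y + 1)%R) l)%:Z + (count (fun y => (y < c)%R) l)%:Z - (size l)%:Z
  + 2 * (\sum_(y <- l) Num.max c (y + 1) - \sum_(y <- l) Num.max c y) = 0.
Proof.
elim: l => [|y l IH] /=; first by rewrite !big_nil; ring.
rewrite !big_cons !maxElt.
case: (ltP y c) => hy.
- have h1 : (c < y + 1) = false by apply/negbTE; rewrite -leNgt; lia.
  have h3 : (c < y) = false by apply/negbTE; rewrite -leNgt; lia.
  rewrite h1 h3 /=; rewrite -[RHS]IH !PoszD intS; ring.
- have h1 : (c < y + 1) = true by lia.
  rewrite h1 /=.
  case: (ltP c y) => hcy /=; rewrite -[RHS]IH !PoszD intS.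
  + ring.
  + have e : y = c by apply/eqP; rewrite eq_le hy hcy.
    rewrite e; ring.
Qed.

Lemma xseq_high (b : seq int) d T M : size b = M -> xseq (mkState b d T M.+1) = b ++ [:: d].
Proof. by move=> h; rewrite /xseq /= take_oversize ?h // drop_oversize ?h. Qed.

Lemma Q_rcons b d : Q (b ++ [:: d]) = Q (d :: b).
Proof. by apply: Q_perm; rewrite cats1 perm_rcons. Qed.

Lemma sum_max1 (a : int) l :
  \sum_(y <- l) Num.max (a + 1) (y + 1) = \sum_(y <- l) Num.max a y + (size l)%:Z.
Proof.
elim: l => [|y l IH] /=; first by rewrite !big_nil.
rewrite !big_cons IH !maxElt ltrD2r intS.
by case: (a < y); ring.
Qed.

Lemma Q_map1 l : Q (map (fun b : int => b + 1) l) = Q l + (size l)%:Z ^+ 2 - (size l)%:Z.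
Proof.
elim: l => [|a l IH] /=; first by rewrite /Q !big_nil; ring.
rewrite !Q_cons IH big_map sum_max1 intS; ring.
Qed.

Lemma step_high (M : nat) (b : seq int) (d T : int) (a : action) (s' : state) :
  size b = M -> allowed a -> Defs.next M (mkState b d T M.+1) a = Some s' ->
  Gf M s' = Gf M (mkState b d T M.+1) + (isI a)%:Z.
Proof.
move=> hsz ha; rewrite /Defs.next /= ltnn eqxx.
rewrite /Gf xseq_high // invc_rcons Q_rcons Q_cons.
case: a ha => //= _.
- case: ifP => // hT [<-].
  rewrite /xseq /= take0 drop0 Q_cons /=.
  have := aux_dm b d; rewrite hsz => h.
  rewrite !PoszD; apply/eqP; rewrite -subr_eq0; apply/eqP; rewrite -[RHS]h; ring.
- case: ifP => [/eqP hT [<-]|//].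
  rewrite /xseq /= take0 drop0 Q_cons /= hT invc_map1 count_map big_map Q_map1.
  have := aux_bp b d; rewrite hsz => h.
  rewrite !PoszD; apply/eqP; rewrite -subr_eq0; apply/eqP; rewrite -[RHS]h.
  have -> : count (preim (fun b0 : int => b0 + 1) (fun y => d < y)) b = count (fun y => d < y + 1) b by [].
  ring.
Qed.

Lemma step (M : nat) (s s' : state) (a : action) :
  inS M s -> allowed a -> Defs.next M s a = Some s' ->
  Gf M s' = Gf M s + (isI a)%:Z.
Proof.
case: s => b d T t [[hsz [/andP[ht1 ht2] _]] _] /= ha hn.
rewrite /= in hsz ht1 ht2.
case: (leqP t M) => htM.
- have hlt : (t.-1 < size b)%N by lia.
  apply: (@step_low M b (take t.-1 b) (drop t b) (nth 0 b t.-1) d T t a s') => //.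
  + have ht0 : (0 < t)%N by lia.
    by rewrite -{1}(cat_take_drop t.-1 b) (drop_nth 0 hlt) (prednK ht0).
  + have ht0 : (0 < t)%N by lia.
    by rewrite size_take hlt (prednK ht0).
- have et : t = M.+1 by lia.
  rewrite et in hn *; exact: step_high.
Qed.

Lemma path_inv M p cur tgt : is_path M cur p tgt -> all allowed (map fst p) ->
  (count isI (map fst p))%:Z + Gf M cur = Gf M tgt.
Proof.
elim: p cur => [|[a s'] p IH] cur /=; first by move=> ->; rewrite add0r.
move=> [hin [hn [_ hp]]] /andP[ha hall].
rewrite -(IH s' hp hall) (step _ _ _ _ hin ha hn) PoszD; ring.
Qed.

Lemma Gf_s0 M : Gf M (s0 M) = 0.
Proof.
have hx : xseq (s0 M) = nseq M.+1 0.
  rewrite /xseq /= take_oversize ?size_nseq // drop_oversize ?size_nseq //.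
  by elim: M => //= M ->.
rewrite /Gf hx /=.
have hi : forall n, invc (nseq n 0) = 0%N.
  by elim=> //= n ->; rewrite count_nseq /= mul0n.
have hq : forall n, Q (nseq n 0) = 0.
  elim=> [|n IH]; first by rewrite /Q !big_nil; ring.
  rewrite /= Q_cons IH big1_seq ?mulr0 ?addr0 // => y /andP[_ /nseqP[-> _]].
  by rewrite maxxx.
rewrite -[0 :: nseq M 0]/(nseq M.+1 0) hq count_nseq /= mul0n hi mulr0; ring.
Qed.

Theorem mainTheorem5 (M q : nat) (hM : (1 <= M)%N) (hq : (2 <= q)%N)
  (s : state) (hs : inS M s)
  (p : seq (action * state)) (hp : is_path M (s0 M) p s)
  (hallowed : all allowed (map fst p))
  (pi_s : nat) (hpi : min_swaps (xseq s) pi_s) :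
  (count isI (map fst p))%:Z = classK M s pi_s.
Proof.
have h := path_inv _ _ _ _ hp hallowed.
rewrite Gf_s0 addr0 in h.
rewrite h (classK_eq _ _ _ (proj1 (proj1 hs))) (min_swaps_inv _ _ hpi).
done.
Qed.
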